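(* Let $(G,w)$ be a weighted trigraph, let $C$ be a clique-cutset of $G$, and let $(A,B,C)$ be a cut-partition of $G$. Set $G_A=G[A\cup C]$, $G_B=G[B\cup C]$, and for every $C'\subseteq C$ set $\alpha_{A\cup C'}=\alpha(\mathrm{Red}[G_A,w;A\cup C'])+\mathrm{Ext}[G_A,w;A\cup C']$. Define $w_B:D(G_B)\to\mathbb N$ by $w_B(c)=\alpha_{A\cup\{c\}}-\alpha_A$ for $c\in C$, and $w_B(p)=w(p)$ for all $p\in D(G_B)\setminus C$. Then $w_B$ is a weight function for $G_B$ (in particular each $w_B(c)\ge 0$), and $\alpha(G,w)=\alpha_A+\alpha(G_B,w_B)$.
   Context: A trigraph $G$ consists of a finite vertex set $V(G)$ and an adjacency function $\theta_G:\binom{V(G)}{2}\to\{-1,0,1\}$; for distinct $u,v$ write $uv$ for $\{u,v\}$. The pair $uv$ is strongly adjacent if $\theta_G(uv)=1$, semi-adjacent if $\theta_G(uv)=0$, strongly anti-adjacent if $\theta_G(uv)=-1$; $u,v$ are anti-adjacent if $\theta_G(uv)\le 0$. A stable set is a set of pairwise anti-adjacent vertices; a strong clique is a set of pairwise strongly adjacent vertices. For $X\subseteq V(G)$, $G[X]$ is the trigraph on $X$ with the restricted adjacency function, and $G\setminus X=G[V(G)\setminus X]$. $G$ is connected if the graph on $V(G)$ whose edges are the pairs $uv$ with $\theta_G(uv)\ge 0$ is connected. A clique-cutset is a (possibly empty) strong clique $C$ such that $G\setminus C$ is disconnected. A cut-partition of $G$ is a partition $(A,B,C)$ of $V(G)$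 with $A,B$ non-empty ($C$ possibly empty) such that every vertex of $A$ is strongly anti-adjacent to every vertex of $B$. $\mathbb N$ denotes the non-negative integers. For a trigraph $G$ let $D(G)=V(G)\cup\{(u,v):u,v\in V(G),u\neq v\}\cup\binom{V(G)}{2}$. A weight function for $G$ is a map $w:D(G)\to\mathbb N$ such that for all distinct $u,v$: if $uv$ is not semi-adjacent then $w(u,v)=w(v,u)=w(uv)=0$, and $w(u,v)\le w(uv)$. A weighted trigraph is a pair $(G,w)$ with $w$ a weight function for $G$; for $X\subseteq V(G)$, $(G[X],w)$ denotes $(G[X],w|_{D(G[X])})$. The weight of $S\subseteq V(G)$ is $\llbracket S\rrbracket_{(G,w)}=\sum_{u\in S}w(u)+\sum_{u\in S}\sum_{v\in V(G)\setminus S}w(u,v)+\sum_{uv\in\binom{V(G)\setminus S}{2}}w(uv)$, and $\alpha(G,w)=\max\{\llbracket S\rrbracket_{(G,w)}: S \text{ a stable set of } G\}$. For $R\subseteq V(G)$, the reduction $\mathrm{Red}[G,w;R]$ is the weighted trigraph $(G[R],w')$ where $w'(u)=\max\{w(u)-\sum_{v\in V(G)\setminus R}(w(uv)-w(u,v)),0\}$ for $u\in R$, and $w'(u,v)=w(u,v)$, $w'(uv)=w(uv)$ for distinct $u,v\in R$. The exterior weight is $\mathrm{Ext}[G,w;R]=\sum_{uv\in\binom{V(G)\setminus R}{2}}w(uv)+\sum_{u\in R}\sum_{v\in V(G)\setminus R}w(uv)$. *)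

(* Defs.v *)
From HB Require Import structures.
From mathcomp Require Import all_boot all_order all_algebra.
Set Implicit Arguments. Unset Strict Implicit. Unset Printing Implicit Defensive.
Import Order.TTheory GRing.Theory Num.Theory.

(* A trigraph on a finite ambient type T is given by its vertex set
   V : {set T} and an adjacency function theta on unordered pairs,
   represented as 2-element sets [set u; v].  G[X] is (X, theta). *)

Section Trigraphs.
Variable T : finType.

Definition is_trigraph (V : {set T}) (theta : {set T} -> int) : Prop :=
  forall u v, u \in V -> v \in V -> u != v ->
    theta [set u; v] \in [:: (-1)%R; 0%R; 1%R].

Definition strongly_adjacent (theta : {set T} -> int) (u v : T) : Prop :=
  theta [set u; v] = 1%R.
Definition anti_adjacent (theta : {set T} -> int) (u v : T) : Prop :=
  (theta [set u; v] <= 0)%R.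
Definition strongly_anti_adjacent (theta : {set T} -> int) (u v : T) : Prop :=
  theta [set u; v] = (-1)%R.

(* stable set: pairwise anti-adjacent (boolean, so it can filter a \max) *)
Definition stable (theta : {set T} -> int) (S : {set T}) : bool :=
  [forall u in S, forall v in S, (u != v) ==> (theta [set u; v] <= 0)%R].

Definition strong_clique (theta : {set T} -> int) (S : {set T}) : Prop :=
  forall u v, u \in S -> v \in S -> u != v -> strongly_adjacent theta u v.

Definition tedge (V : {set T}) (theta : {set T} -> int) : rel T :=
  fun x y => [&& x \in V, y \in V, x != y & (0 <= theta [set x; y])%R].

Definition tconnected (V : {set T}) (theta : {set T} -> int) : Prop :=
  forall u v, u \in V -> v \in V -> connect (tedge V theta) u v.

Definition clique_cutset (V : {set T}) (theta : {set T} -> int) (C : {set T}) : Prop :=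
  C \subset V /\ strong_clique theta C /\ ~ tconnected (V :\: C) theta.

Definition cut_partition (V : {set T}) (theta : {set T} -> int) (A B C : {set T}) : Prop :=
  [/\ A :|: B :|: C = V, [disjoint A & B], [disjoint A & C] & [disjoint B & C]] /\
  [/\ A != set0, B != set0 &
      forall a b, a \in A -> b \in B -> strongly_anti_adjacent theta a b].

(* Weights: vertex weights wv, arc weights wa (u,v), pair weights we {u,v}.
   Only the values on D(G) are relevant. *)
Record wfun := WFun { wv : T -> nat; wa : T -> T -> nat; we : {set T} -> nat }.

Definition is_weight (V : {set T}) (theta : {set T} -> int) (w : wfun) : Prop :=
  forall u v, u \in V -> v \in V -> u != v ->
    (theta [set u; v] != 0%R -> [/\ wa w u v = 0, wa w v u = 0 & we w [set u; v] = 0])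
    /\ wa w u v <= we w [set u; v].

Definition pairsum (w : wfun) (X : {set T}) : nat :=
  \sum_(e : {set T} | (e \subset X) && (#|e| == 2)) we w e.

Definition weight (V : {set T}) (w : wfun) (S : {set T}) : nat :=
  \sum_(u in S) wv w u + \sum_(u in S) \sum_(v in V :\: S) wa w u v
  + pairsum w (V :\: S).

Definition alpha (V : {set T}) (theta : {set T} -> int) (w : wfun) : nat :=
  \max_(S : {set T} | (S \subset V) && stable theta S) weight V w S.

(* Red[G,w;R]: the weighted trigraph (G[R], w'); vertex set R, same theta. *)
Definition Red_w (V : {set T}) (w : wfun) (R : {set T}) : wfun :=
  WFun (fun u => wv w u - \sum_(v in V :\: R) (we w [set u; v] - wa w u v))
       (wa w) (we w).

Definition Ext (V : {set T}) (w : wfun) (R : {set T}) : nat :=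
  pairsum w (V :\: R) + \sum_(u in R) \sum_(v in V :\: R) we w [set u; v].

End Trigraphs.

(* Main.v *)
Require Import Defs.
From HB Require Import structures.
From mathcomp Require Import all_boot all_order all_algebra.
From mathcomp Require Import zify.
Set Implicit Arguments. Unset Strict Implicit. Unset Printing Implicit Defensive.

Ltac casemem := repeat match goal with |- context[?x \in ?A] =>
  let E := fresh "E" in case E: (x \in A) end.
Ltac prep x := repeat match goal with
  | H : is_true (?A \subset ?B) |- _ => move: (subsetP H x); clear H
  | H : is_true [disjoint ?A & ?B] |- _ => move: (fun h : x \in A => negbT (disjointFr H h)); clear H
  end.
Ltac fin := intros; repeat match goal with H : is_true true -> _ |- _ => specialize (H isT) end;
  try match goal with H : is_true false |- _ => by case: (notF H) end;
  try match goal with H : true = false |- _ => discriminate H end;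
  try match goal with H : false = true |- _ => discriminate H end; by [].
Ltac sdec := apply/setP; let x := fresh "x" in intro x; prep x; rewrite !inE; casemem; rewrite /=; fin.
Ltac subdec := apply/subsetP; let x := fresh "x" in intro x; prep x; rewrite !inE; casemem; rewrite /=; fin.
Ltac ddec := rewrite -setI_eq0; apply/eqP; sdec.

Ltac gen1 := match goal with |- context [?t] =>
   let T := type of t in constr_eq T nat;
   lazymatch t with
   | _ + _ => fail | _ - _ => fail | _ * _ => fail | O => fail | S _ => fail
   | _ => tryif is_var t then fail else (let x := fresh "n" in generalize t; intro x) end end.
Ltac glia := repeat gen1; repeat match goal with H : _ |- _ => clear H end; intros; lia.

Section H.
Variable T : finType.
Implicit Types (X Y : {set T}) (w : wfun T).

Lemma set2_eqE (x y a b : T) : x != y ->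
  ([set x; y] == [set a; b]) = ((x, y) == (a, b)) || ((x, y) == (b, a)).
Proof.
move=> nxy; apply/idP/idP.
- move/eqP=> E.
  have xab : x \in [set a; b] by rewrite -E !inE eqxx.
  have yab : y \in [set a; b] by rewrite -E !inE eqxx orbT.
  move: xab yab nxy; rewrite !inE -!pair_eqE /=.
  by case/orP=>/eqP-> /orP[]/eqP->; rewrite ?eqxx //= ?andbT ?orbT.
- by case/orP=>/eqP[-> ->] //; rewrite setUC.
Qed.

Lemma sumU (F : T -> nat) X Y : [disjoint X & Y] ->
  \sum_(i in X :|: Y) F i = \sum_(i in X) F i + \sum_(i in Y) F i.
Proof. by move=> d; rewrite -bigU //; apply: eq_bigl => i; rewrite !inE. Qed.

Definition DS w X := \sum_(x in X) \sum_(y in X :\ x) we w [set x; y].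

Lemma DS_pairsum w X : DS w X = 2 * pairsum w X.
Proof.
rewrite /DS /pairsum pair_big_dep /=.
rewrite (partition_big (fun p : T * T => [set p.1; p.2])
   (fun e : {set T} => (e \subset X) && (#|e| == 2))) /=; last first.
  move=> [x y] /=; rewrite !inE => /andP[xX /andP[nyx yX]].
  rewrite cards2 (eq_sym x y) nyx andbT; apply/subsetP=> z /set2P [] -> //.
rewrite big_distrr /=; apply: eq_bigr => e /andP[eX /cards2P[a [b [nab E]]]]; subst e.
rewrite (eq_bigr (fun _ => we w [set a; b])); last by move=> p /andP[_ /eqP->].
rewrite sum_nat_const; congr (_ * _).
have aX : a \in X by apply: (subsetP eX); exact: set21.
have bX : b \in X by apply: (subsetP eX); exact: set22.
transitivity #|[set (a, b); (b, a)]|; last first.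
  by rewrite cards2 xpair_eqE negb_and nab.
apply: eq_card => [[x y]]; rewrite [in LHS]unfold_in /= !inE.
apply/idP/idP.
- case/andP=> /andP[xX /andP[nyx yX]].
  by rewrite set2_eqE 1?eq_sym //.
- case/orP=>/eqP[-> ->]; rewrite ?set2_eqE ?eqxx ?aX ?bX //= ?orbT ?andbT //;
  by rewrite ?nab // eq_sym nab.
Qed.

Lemma pairsumU w X Y : [disjoint X & Y] ->
  pairsum w (X :|: Y) = pairsum w X + pairsum w Y
     + \sum_(x in X) \sum_(y in Y) we w [set x; y].
Proof.
move=> dXY.
suff: 2 * pairsum w (X :|: Y) = 2 * (pairsum w X + pairsum w Y
     + \sum_(x in X) \sum_(y in Y) we w [set x; y]) by lia.
rewrite -DS_pairsum !mulnDr -!DS_pairsum /DS sumU //=.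
have -> : \sum_(x in X) \sum_(y in (X :|: Y) :\ x) we w [set x; y]
  = \sum_(x in X) \sum_(y in X :\ x) we w [set x; y]
    + \sum_(x in X) \sum_(y in Y) we w [set x; y].
  rewrite -big_split; apply: eq_bigr => x xX /=.
  rewrite setDUl (setDidPl (_ : [disjoint Y & [set x]])); last first.
    by rewrite disjoint_sym disjoints1 (disjointFr dXY xX).
  by rewrite sumU //; apply: disjointWl dXY; apply: subsetDl.
have -> : \sum_(x in Y) \sum_(y in (X :|: Y) :\ x) we w [set x; y]
  = \sum_(x in Y) \sum_(y in Y :\ x) we w [set x; y]
    + \sum_(x in X) \sum_(y in Y) we w [set x; y].
  rewrite [X in _ = _ + X]exchange_big /= -big_split.
  apply: eq_bigr => x xY /=.
  rewrite setDUl (setDidPl (_ : [disjoint X & [set x]])); last first.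
    by rewrite disjoint_sym disjoints1 (disjointFl dXY xY).
  rewrite sumU /=; last by apply: disjointWr dXY; apply: subsetDl.
  rewrite addnC; congr (_ + _); apply: eq_bigr => y _; by rewrite setUC.
lia.
Qed.

Lemma pairsum0 w X : (forall u v, u \in X -> v \in X -> u != v -> we w [set u; v] = 0) ->
  pairsum w X = 0.
Proof.
move=> h; apply: big1 => e /andP[eX /cards2P[a [b [nab E]]]]; subst e.
by apply: h => //; apply: (subsetP eX); rewrite !inE eqxx ?orbT.
Qed.

Definition wle w X := forall u v, u \in X -> v \in X -> u != v ->
  wa w u v <= we w [set u; v].

Lemma weight_wv w1 w2 X (S : {set T}) : wa w1 = wa w2 -> we w1 = we w2 ->
  weight X w1 S + \sum_(u in S) wv w2 u = weight X w2 S + \sum_(u in S) wv w1 u.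
Proof.
move=> ea ee; rewrite /weight /pairsum ea ee; lia.
Qed.

Lemma remove_zero w X (S Z : {set T}) : Z \subset S -> S \subset X -> wle w X ->
  (forall u, u \in Z -> wv w u = 0) ->
  weight X w S <= weight X w (S :\: Z).
Proof.
move=> ZS SX hw hz.
have ES : S = (S :\: Z) :|: Z by sdec.
have dS : [disjoint S :\: Z & Z] by ddec.
have EX : X :\: (S :\: Z) = (X :\: S) :|: Z by sdec.
have dX : [disjoint X :\: S & Z] by ddec.
rewrite /weight {1 2}ES !sumU // EX pairsumU //.
rewrite [\sum_(u in Z) wv w u]big1 ?addn0 //.
have h1 : \sum_(u in S :\: Z) \sum_(v in X :\: S) wa w u v <=
          \sum_(u in S :\: Z) \sum_(v in X :\: S :|: Z) wa w u v.
  by apply: leq_sum => u _; rewrite sumU //; apply: leq_addr.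
have h2 : \sum_(u in Z) \sum_(v in X :\: S) wa w u v <=
          \sum_(x in X :\: S) \sum_(y in Z) we w [set x; y].
  rewrite exchange_big /=; apply: leq_sum => v vXS; apply: leq_sum => u uZ.
  move: vXS; rewrite !inE => /andP[vS vX].
  have uS := subsetP ZS u uZ.
  rewrite setUC; apply: hw => //; first by apply: (subsetP SX).
  by apply/eqP=> E; subst; rewrite uS in vS.
lia.
Qed.

Definition Dd w (W R : {set T}) u := \sum_(v in W :\: R) (we w [set u; v] - wa w u v).

Lemma red_identity w (W R S : {set T}) : R \subset W -> S \subset R -> wle w W ->
  weight R (Red_w W w R) S + Ext W w R + \sum_(u in S) wv w u =
  weight W w S + \sum_(u in S) ((wv w u - Dd w W R u) + Dd w W R u).
Proof.
move=> RW SR hw.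
have E1 : W :\: S = (R :\: S) :|: (W :\: R) by sdec.
have d1 : [disjoint R :\: S & W :\: R] by ddec.
have E2 : R = S :|: (R :\: S) by sdec.
have d2 : [disjoint S & R :\: S] by ddec.
rewrite /weight /Ext /= E1 pairsumU //.
have -> : pairsum (Red_w W w R) (R :\: S) = pairsum w (R :\: S) by [].
have -> : \sum_(u in S) (wv w u - \sum_(v in W :\: R) (we w [set u; v] - wa w u v))
  = \sum_(u in S) (wv w u - Dd w W R u) by [].
have sR : forall F : T -> nat, \sum_(u in R) F u = \sum_(u in S) F u + \sum_(u in R :\: S) F u.
  by move=> F; rewrite {1}E2 sumU.
rewrite sR.
have -> : \sum_(u in S) \sum_(v in R :\: S :|: W :\: R) wa w u v =
   \sum_(u in S) \sum_(v in R :\: S) wa w u v + \sum_(u in S) \sum_(v in W :\: R) wa w u v.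
  by rewrite -big_split; apply: eq_bigr => u _; rewrite sumU.
have -> : \sum_(u in S) \sum_(v in W :\: R) we w [set u; v] =
   \sum_(u in S) Dd w W R u + \sum_(u in S) \sum_(v in W :\: R) wa w u v.
  rewrite -big_split; apply: eq_bigr => u uS; rewrite /Dd -big_split.
  apply: eq_bigr => v; rewrite !inE => /andP[vR vW] /=; rewrite subnK //.
  apply: hw => //; first by apply: (subsetP RW); apply: (subsetP SR).
  by apply/eqP=> E; subst; rewrite (subsetP SR _ uS) in vR.
rewrite big_split /=; lia.
Qed.

Lemma stable_sub theta (S S' : {set T}) : S' \subset S -> stable theta S -> stable theta S'.
Proof.
move=> sub /forallP h; apply/forallP=> u; apply/implyP=> uS'.
have /implyP/(_ (subsetP sub u uS'))/forallP h2 := h u.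
apply/forallP=> v; apply/implyP=> vS'.
exact: (implyP (h2 v) (subsetP sub v vS')).
Qed.

Lemma stable0 theta : stable theta (set0 : {set T}).
Proof. by apply/forallP=> u; rewrite inE. Qed.

Lemma red_alpha theta w (W R : {set T}) : R \subset W -> wle w W ->
  alpha R theta (Red_w W w R) + Ext W w R =
  \max_(S : {set T} | (S \subset R) && stable theta S) weight W w S.
Proof.
move=> RW hw; apply/eqP; rewrite eqn_leq; apply/andP; split; last first.
  apply/bigmax_leqP=> S /andP[SR st].
  have := red_identity RW SR hw.
  have : \sum_(u in S) wv w u <= \sum_(u in S) ((wv w u - Dd w W R u) + Dd w W R u).
    by apply: leq_sum => u _; lia.
  have : weight R (Red_w W w R) S <= alpha R theta (Red_w W w R).
    by rewrite /alpha; apply: (@leq_bigmax_cond _ (fun S : {set T} => (S \subset R) && stable theta S) (fun S => weight R (Red_w W w R) S)); rewrite SR st.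
  lia.
rewrite /alpha.
have pos : 0 < #|(fun S : {set T} => (S \subset R) && stable theta S)|.
  apply/card_gt0P; exists set0; by rewrite unfold_in /= sub0set stable0.
case: (eq_bigmax_cond (fun S => weight R (Red_w W w R) S) pos) => S0.
rewrite unfold_in /= => /andP[S0R st0] ->.
set Z := [set u in S0 | wv w u < Dd w W R u].
have ZS : Z \subset S0 by apply/subsetP=> u; rewrite inE => /andP[].
have S1R : S0 :\: Z \subset R by apply: subset_trans S0R; apply: subsetDl.
have h1 : weight R (Red_w W w R) S0 <= weight R (Red_w W w R) (S0 :\: Z).
  apply: remove_zero => //.
  - move=> u v uR vR; apply: hw; by apply: (subsetP RW).
  - move=> u; rewrite inE => /andP[_ lt] /=.
    by apply/eqP; rewrite subn_eq0 ltnW.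
have := red_identity RW S1R hw.
have -> : \sum_(u in S0 :\: Z) ((wv w u - Dd w W R u) + Dd w W R u) =
          \sum_(u in S0 :\: Z) wv w u.
  apply: eq_bigr => u; rewrite !inE => /andP[h uS]; move: h.
  by rewrite uS /= -leqNgt => le; rewrite subnK.
have : weight W w (S0 :\: Z) <= \max_(S : {set T} | (S \subset R) && stable theta S) weight W w S.
  apply: (@leq_bigmax_cond _ (fun S : {set T} => (S \subset R) && stable theta S) (fun S => weight W w S)).
  by rewrite S1R (stable_sub (subsetDl _ _) st0).
move=> h2 h3; apply: leq_trans h2; apply: leq_trans (_ : weight R (Red_w W w R) (S0 :\: Z) + Ext W w R <= _).
  by rewrite leq_add2r.
by move/eqP: h3; rewrite eqn_add2r => /eqP ->.
Qed.

Definition arc w (P Q : {set T}) := \sum_(u in P) \sum_(v in Q) wa w u v.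
Definition cross w (P Q : {set T}) := \sum_(u in P) \sum_(v in Q) we w [set u; v].

Lemma arcUl w (P P' Q : {set T}) : [disjoint P & P'] ->
  arc w (P :|: P') Q = arc w P Q + arc w P' Q.
Proof. by move=> d; rewrite /arc sumU. Qed.
Lemma arcUr w (P Q Q' : {set T}) : [disjoint Q & Q'] ->
  arc w P (Q :|: Q') = arc w P Q + arc w P Q'.
Proof. by move=> d; rewrite /arc -big_split; apply: eq_bigr => u _; rewrite sumU. Qed.
Lemma crossUl w (P P' Q : {set T}) : [disjoint P & P'] ->
  cross w (P :|: P') Q = cross w P Q + cross w P' Q.
Proof. by move=> d; rewrite /cross sumU. Qed.
Lemma crossC w (P Q : {set T}) : cross w P Q = cross w Q P.
Proof.
rewrite /cross exchange_big; apply: eq_bigr => u _; apply: eq_bigr => v _.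
by rewrite setUC.
Qed.

Lemma decomp w (A B C S : {set T}) :
  [disjoint A & B] -> [disjoint A & C] -> [disjoint B & C] ->
  S \subset A :|: B :|: C ->
  (forall a b, a \in A -> b \in B -> [/\ wa w a b = 0, wa w b a = 0 & we w [set a; b] = 0]) ->
  (forall c c', c \in C -> c' \in C -> c != c' -> wa w c c' = 0 /\ we w [set c; c'] = 0) ->
  weight (A :|: B :|: C) w S + \sum_(u in S :&: C) wv w u =
  weight (A :|: C) w (S :&: (A :|: C)) + weight (B :|: C) w (S :&: (B :|: C)).
Proof.
move=> dAB dAC dBC SV hAB hC.
have ES : S = (S :&: A) :|: (S :&: B) :|: (S :&: C) by sdec.
have ESA : S :&: (A :|: C) = (S :&: A) :|: (S :&: C) by sdec.
have ESB : S :&: (B :|: C) = (S :&: B) :|: (S :&: C) by sdec.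
have EV : (A :|: B :|: C) :\: S = (A :\: S) :|: (C :\: S) :|: (B :\: S) by sdec.
have EA : (A :|: C) :\: (S :&: (A :|: C)) = (A :\: S) :|: (C :\: S) by sdec.
have EB : (B :|: C) :\: (S :&: (B :|: C)) = (B :\: S) :|: (C :\: S) by sdec.
have d1 : [disjoint S :&: A :|: S :&: B & S :&: C] by ddec.
have d2 : [disjoint S :&: A & S :&: B] by ddec.
have d3 : [disjoint S :&: A & S :&: C] by ddec.
have d4 : [disjoint S :&: B & S :&: C] by ddec.
have d5 : [disjoint A :\: S :|: C :\: S & B :\: S] by ddec.
have d6 : [disjoint A :\: S & C :\: S] by ddec.
have d7 : [disjoint B :\: S & C :\: S] by ddec.
rewrite /weight EV EA EB ESA ESB.
rewrite !(_ : forall P Q : {set T}, \sum_(u in P) \sum_(v in Q) wa w u v = arc w P Q) //.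
have -> : \sum_(u in S) wv w u = \sum_(u in S :&: A) wv w u + \sum_(u in S :&: B) wv w u
   + \sum_(u in S :&: C) wv w u by rewrite {1}ES !sumU.
have -> : arc w S (A :\: S :|: C :\: S :|: B :\: S) =
   arc w (S :&: A) (A :\: S :|: C :\: S :|: B :\: S) + arc w (S :&: B) (A :\: S :|: C :\: S :|: B :\: S)
   + arc w (S :&: C) (A :\: S :|: C :\: S :|: B :\: S) by rewrite {1}ES !arcUl.
rewrite !sumU // !arcUr //.
rewrite !pairsumU // !(_ : forall P Q : {set T}, \sum_(u in P) \sum_(v in Q) we w [set u; v] = cross w P Q) // crossUl //.
have z1 : arc w (S :&: A) (B :\: S) = 0.
  apply: big1 => u; rewrite inE => /andP[_ uA]; apply: big1 => v; rewrite inE => /andP[_ vB].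
  by case: (hAB u v uA vB).
have z2 : arc w (S :&: B) (A :\: S) = 0.
  apply: big1 => u; rewrite inE => /andP[_ uB]; apply: big1 => v; rewrite inE => /andP[_ vA].
  by case: (hAB v u vA uB).
have z3 : arc w (S :&: C) (C :\: S) = 0.
  apply: big1 => u; rewrite inE => /andP[uS uC]; apply: big1 => v; rewrite !inE => /andP[vS vC].
  apply: (proj1 (hC u v uC vC _)); by apply/eqP=> E; subst; rewrite uS in vS.
have z4 : cross w (A :\: S) (B :\: S) = 0.
  apply: big1 => u; rewrite inE => /andP[_ uA]; apply: big1 => v; rewrite inE => /andP[_ vB].
  by case: (hAB u v uA vB).
have z5 : pairsum w (C :\: S) = 0.
  apply: pairsum0 => u v; rewrite !inE => /andP[_ uC] /andP[_ vC] nuv.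
  exact: (proj2 (hC u v uC vC nuv)).
rewrite z1 z2 z3 z4 z5 (crossC w (C :\: S) (B :\: S)).
rewrite !arcUl // z3; glia.
Qed.
End H.

Lemma stable_clique (T : finType) theta (S C : {set T}) : stable theta S -> strong_clique theta C ->
  S :&: C = set0 \/ exists2 c, c \in C & S :&: C = [set c].
Proof.
move=> st cl; case: (set_0Vmem (S :&: C)) => [->|[c]]; first by left.
rewrite inE => /andP[cS cC]; right; exists c => //.
apply/setP=> x; rewrite !inE; apply/idP/idP; last by move/eqP->; rewrite cS cC.
case/andP=> xS xC; apply/negPn/negP=> nxc.
have := cl x c xC cC nxc; rewrite /strongly_adjacent => E.
move/forallP: st => /(_ x) /implyP /(_ xS) /forallP /(_ c) /implyP /(_ cS) /implyP /(_ nxc).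
by rewrite E.
Qed.

Lemma stableU (T : finType) theta (T1 T2 : {set T}) : stable theta T1 -> stable theta T2 ->
  (forall u v, u \in T1 -> u \notin T2 -> v \in T2 -> v \notin T1 -> (theta [set u; v] <= 0)%R) ->
  stable theta (T1 :|: T2).
Proof.
move=> /forallP s1 /forallP s2 h; apply/forallP=> u; apply/implyP=> uS.
apply/forallP=> v; apply/implyP=> vS; apply/implyP=> nuv.
have g1 : forall x y, x \in T1 -> y \in T1 -> x != y -> (theta [set x; y] <= 0)%R.
  move=> x y xT yT nxy.
  exact: (implyP (implyP (forallP (implyP (s1 x) xT) y) yT) nxy).
have g2 : forall x y, x \in T2 -> y \in T2 -> x != y -> (theta [set x; y] <= 0)%R.
  move=> x y xT yT nxy.
  exact: (implyP (implyP (forallP (implyP (s2 x) xT) y) yT) nxy).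
move: uS vS; rewrite !inE.
case u1: (u \in T1); case u2: (u \in T2); case v1: (v \in T1); case v2: (v \in T2) => //= _ _;
  try by [apply: g1|apply: g2].
- by apply: h; rewrite ?u1 ?u2 ?v1 ?v2.
- by rewrite setUC; apply: h; rewrite ?u1 ?u2 ?v1 ?v2.
Qed.

Theorem lemma3p10 (T : finType) (V : {set T}) (theta : {set T} -> int)
    (w : wfun T) (A B C : {set T}) :
  is_trigraph V theta -> is_weight V theta w ->
  clique_cutset V theta C -> cut_partition V theta A B C ->
  let GA := A :|: C in
  let GB := B :|: C in
  let alphaAC := fun C' : {set T} =>
    alpha (A :|: C') theta (Red_w GA w (A :|: C')) + Ext GA w (A :|: C') in
  let wB := WFun (fun v => if v \in C then alphaAC [set v] - alphaAC set0
                           else wv w v) (wa w) (we w) in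
  (forall c, c \in C -> alphaAC set0 <= alphaAC [set c]) /\
  is_weight GB theta wB /\
  alpha V theta w = alphaAC set0 + alpha GB theta wB.
Proof.
move=> _ hw [CV [cl _]] [[EV dAB dAC dBC] [_ _ hab]] GA GB alphaAC wB.
have AV : A \subset V by rewrite -EV; subdec.
have BV : B \subset V by rewrite -EV; subdec.
have GAV : GA \subset V by rewrite /GA -EV; subdec.
have GBV : GB \subset V by rewrite /GB -EV; subdec.
have wleV : wle w V by move=> u v uV vV nuv; case: (hw u v uV vV nuv).
have wleGA : wle w GA by move=> u v uV vV; apply: wleV; apply: (subsetP GAV).
have hAB : forall a b, a \in A -> b \in B ->
    [/\ wa w a b = 0, wa w b a = 0 & we w [set a; b] = 0].
  move=> a b aA bB.
  have nab : a != b by apply/eqP=> E; subst; rewrite (disjointFr dAB aA) in bB.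
  case: (hw a b (subsetP AV a aA) (subsetP BV b bB) nab) => h _.
  by move: h; rewrite (hab a b aA bB) => /(_ isT) [h1 h2 h3]; split.
have hC : forall c c', c \in C -> c' \in C -> c != c' ->
    wa w c c' = 0 /\ we w [set c; c'] = 0.
  move=> c c' cC c'C ncc.
  case: (hw c c' (subsetP CV c cC) (subsetP CV c' c'C) ncc) => h _.
  by move: h; rewrite (cl c c' cC c'C ncc) => /(_ isT) [h1 h2 h3]; split.
pose MA (C' : {set T}) := \max_(S : {set T} | (S \subset A :|: C') && stable theta S) weight GA w S.
have red : forall C' : {set T}, C' \subset C -> alphaAC C' = MA C'.
  move=> C' sC; rewrite /alphaAC /MA red_alpha //.
  by rewrite /GA; subdec.
have red0 : alphaAC set0 = MA set0 by apply: red; apply: sub0set.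
have red1 : forall c, c \in C -> alphaAC [set c] = MA [set c].
  by move=> c cC; apply: red; rewrite sub1set.
have part1 : forall c, c \in C -> alphaAC set0 <= alphaAC [set c].
  move=> c cC; rewrite red0 red1 //; apply/bigmax_leqP => S /andP[SA st].
  apply: (@leq_bigmax_cond _ (fun S : {set T} => (S \subset A :|: [set c]) && stable theta S)
     (fun S => weight GA w S)).
  rewrite st andbT; apply: subset_trans SA _; subdec.
split; first exact: part1.
split.
  move=> u v uG vG nuv; exact: (hw u v (subsetP GBV u uG) (subsetP GBV v vG) nuv).
have key : forall S : {set T}, S \subset V ->
   weight V w S + \sum_(u in S :&: C) wv wB u =
   weight GA w (S :&: GA) + weight GB wB (S :&: GB).
  move=> S SV.
  have SV' : S \subset A :|: B :|: C by rewrite EV.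
  have := decomp dAB dAC dBC SV' hAB hC; rewrite EV => D.
  have := weight_wv GB (S :&: GB) (w1 := wB) (w2 := w) erefl erefl.
  have ES : S :&: GB = (S :&: B) :|: (S :&: C) by rewrite /GB; sdec.
  have dd : [disjoint S :&: B & S :&: C] by ddec.
  rewrite ES !sumU // -ES.
  have -> : \sum_(u in S :&: B) wv wB u = \sum_(u in S :&: B) wv w u.
    apply: eq_bigr => u; rewrite inE => /andP[_ uB] /=.
    by rewrite (disjointFr dBC uB).
  move: D; rewrite /GA /GB; glia.
have comb : forall T1 T2 : {set T}, T1 \subset GA -> T2 \subset GB ->
    stable theta T1 -> stable theta T2 -> T1 :&: C = T2 :&: C ->
    weight GA w T1 + weight GB wB T2 <= alpha V theta w + \sum_(u in T1 :&: C) wv wB u.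
  move=> T1 T2 s1 s2 st1 st2 e.
  have e' : forall x, (x \in T1) && (x \in C) = (x \in T2) && (x \in C).
    by move=> x; move/setP: e => /(_ x); rewrite !inE.
  have SV : T1 :|: T2 \subset V by rewrite -EV; move: s1 s2; rewrite /GA /GB => s1 s2; subdec.
  have E1 : (T1 :|: T2) :&: GA = T1.
    apply/setP=> x; move: (e' x); move: s1 s2 dAB; rewrite /GA /GB => s1 s2 d.
    prep x; rewrite !inE; casemem; rewrite /=; fin.
  have E2 : (T1 :|: T2) :&: GB = T2.
    apply/setP=> x; move: (e' x); move: s1 s2 dAB; rewrite /GA /GB => s1 s2 d.
    prep x; rewrite !inE; casemem; rewrite /=; fin.
  have E3 : (T1 :|: T2) :&: C = T1 :&: C.
    apply/setP=> x; move: (e' x); prep x; rewrite !inE; casemem; rewrite /=; fin.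
  have st : stable theta (T1 :|: T2).
    apply: stableU => // u v uT1 uT2 vT2 vT1.
    have uA : u \in A.
      move: (e' u) (subsetP s1 u uT1); rewrite /GA inE uT1 (negbTE uT2) /=.
      by case: (u \in C) => //= _; rewrite orbF.
    have vB : v \in B.
      move: (e' v) (subsetP s2 v vT2); rewrite /GB inE vT2 (negbTE vT1) /=.
      by case: (v \in C) => //= _; rewrite orbF.
    by rewrite (hab u v uA vB).
  have := key _ SV; rewrite E1 E2 E3 => <-.
  rewrite leq_add2r; apply: (@leq_bigmax_cond _ (fun S : {set T} => (S \subset V) && stable theta S)
     (fun S => weight V w S)).
  by rewrite SV st.
have a0le : forall c, c \in C -> alphaAC [set c] - alphaAC set0 + alphaAC set0 = alphaAC [set c].
  by move=> c cC; rewrite subnK // part1.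
apply/eqP; rewrite eqn_leq; apply/andP; split.
  apply/bigmax_leqP => S /andP[SV st].
  have := key S SV.
  have hB : weight GB wB (S :&: GB) <= alpha GB theta wB.
    apply: (@leq_bigmax_cond _ (fun S : {set T} => (S \subset GB) && stable theta S)
     (fun S => weight GB wB S)).
    by rewrite subsetIr (stable_sub (subsetIl _ _) st).
  have e' : forall x, (x \in S) && (x \in C) = (x \in S :&: C) by move=> x; rewrite inE.
  case: (stable_clique st cl) => [E | [c cC E]].
  - rewrite E big_set0 addn0.
    have hA : weight GA w (S :&: GA) <= alphaAC set0.
      rewrite red0; apply: (@leq_bigmax_cond _ (fun S : {set T} => (S \subset A :|: set0) && stable theta S)
       (fun S => weight GA w S)).
      rewrite (stable_sub (subsetIl _ _) st) andbT.
      apply/subsetP=> x; rewrite !inE => /andP[xS /orP[xA|xC]]; first by rewrite xA.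
      by move: (e' x); rewrite E !inE xS xC.
    move: hA hB; glia.
  - rewrite E big_set1 /= cC.
    have hA : weight GA w (S :&: GA) <= alphaAC [set c].
      rewrite red1 //; apply: (@leq_bigmax_cond _ (fun S : {set T} => (S \subset A :|: [set c]) && stable theta S)
       (fun S => weight GA w S)).
      rewrite (stable_sub (subsetIl _ _) st) andbT.
      apply/subsetP=> x; rewrite !inE => /andP[xS /orP[xA|xC]]; first by rewrite xA.
      by move: (e' x); rewrite E !inE xS xC /= => <-; rewrite orbT.
    move: hA hB (a0le c cC); glia.
have posB : 0 < #|(fun S : {set T} => (S \subset GB) && stable theta S)|.
  apply/card_gt0P; exists set0; by rewrite unfold_in /= sub0set stable0.
have posA : forall C' : {set T}, 0 < #|(fun S : {set T} => (S \subset A :|: C') && stable theta S)|.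
  move=> C'; apply/card_gt0P; exists set0; by rewrite unfold_in /= sub0set stable0.
case: (eq_bigmax_cond (fun S => weight GB wB S) posB) => S'.
rewrite unfold_in /= => /andP[S'G st'] aB.
have aB' : alpha GB theta wB = weight GB wB S' by rewrite -aB.
case: (eq_bigmax_cond (fun S => weight GA w S) (posA set0)) => SA.
rewrite unfold_in /= => /andP[SAA stA] aA.
have aA' : alphaAC set0 = weight GA w SA by rewrite red0 -aA.
have SAG : SA \subset GA by apply: subset_trans SAA _; rewrite /GA; subdec.
have SAC : SA :&: C = set0.
  apply/setP=> x; rewrite !inE; apply/negbTE; rewrite negb_and.
  case xS: (x \in SA) => //=; move: (subsetP SAA x xS); rewrite !inE orbF => xA.
  by rewrite (disjointFr dAC xA).
case: (stable_clique st' cl) => [E | [c cC E]].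
  have := comb SA S' SAG S'G stA st' (etrans SAC (esym E)).
  by rewrite SAC big_set0 addn0 -aA' -aB'.
have cS' : c \in S' by move/setP: E => /(_ c); rewrite !inE eqxx => /andP[].
case: (eq_bigmax_cond (fun S => weight GA w S) (posA [set c])) => Ts.
rewrite unfold_in /= => /andP[TsA stT] aT.
have aT' : alphaAC [set c] = weight GA w Ts by rewrite red1 // -aT.
case cT: (c \in Ts).
  have TsC : Ts :&: C = [set c].
    apply/setP=> x; rewrite !inE; apply/idP/idP.
      case/andP=> xT xC; move: (subsetP TsA x xT); rewrite !inE => /orP[xA|//].
      by rewrite (disjointFr dAC xA) in xC.
    by move/eqP->; rewrite cT cC.
  have TsG : Ts \subset GA by apply: subset_trans TsA _; rewrite /GA; apply: setUS; rewrite sub1set.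
  have := comb Ts S' TsG S'G stT st' (etrans TsC (esym E)).
  rewrite TsC big_set1 /= cC -aT' -aB'.
  move: (a0le c cC); glia.
have ac0 : alphaAC [set c] <= alphaAC set0.
  rewrite aT' red0; apply: (@leq_bigmax_cond _ (fun S : {set T} => (S \subset A :|: set0) && stable theta S)
     (fun S => weight GA w S)).
  rewrite stT andbT; apply/subsetP=> x xT; move: (subsetP TsA x xT); rewrite !inE.
  case/orP=> [->//|/eqP E']; by subst; rewrite cT in xT.
have wc0 : wv wB c = 0 by rewrite /= cC; apply/eqP; rewrite subn_eq0.
set S'' := S' :\: [set c].
have rz : weight GB wB S' <= weight GB wB S''.
  apply: remove_zero => //; first by rewrite sub1set.
  - move=> u v uG vG; exact: (wleV u v (subsetP GBV u uG) (subsetP GBV v vG)).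
  - by move=> u; rewrite inE => /eqP->.
have S''G : S'' \subset GB by apply: subset_trans S'G; apply: subsetDl.
have st'' : stable theta S'' by apply: stable_sub st'; apply: subsetDl.
have S''C : S'' :&: C = set0.
  apply/setP=> x; rewrite !inE; move/setP: E => /(_ x); rewrite !inE.
  by case: (x \in S'); case: (x \in C); case: (x == c).
have := comb SA S'' SAG S''G stA st'' (etrans SAC (esym S''C)).
rewrite SAC big_set0 addn0 -aA' => h; rewrite aB'.
move: rz h; glia.
Qed.
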